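(* Let $0\le p,q<1$, $\theta\in(0,1)$ irrational, $N$ a positive integer. Let $\mathcal O(S^3_{pq\theta})$ be the universal complex unital $*$-algebra generated by $a,b$ subject to $ab=e^{2\pi i\theta}ba$, $ab^*=e^{-2\pi i\theta}b^*a$, $a^*a-paa^*=1-p$, $b^*b-qbb^*=1-q$, $(1-aa^* )(1-bb^* )=0$, with right $\mathcal O(U(1))$-coaction $x\mapsto x_{(0)}\otimes x_{(1)}$ determined by $a\mapsto a\otimes u$, $b\mapsto b\otimes u$ (a $*$-algebra map), and corresponding $U(1)$-action $\alpha_\lambda(a)=\lambda a$, $\alpha_\lambda(b)=\lambda b$. Let $\mathbb Z/N\mathbb Z$ act on $\mathcal O(S^3_{pq\theta})\otimes\mathcal O(U(1))$ by $\tilde\alpha_{\zeta}(x\otimes h)=\alpha_\zeta(x)\otimes h(\,\cdot\,\zeta^{-1})$ for $\zeta=e^{2\pi ik/N}$. Let $\psi:\mathcal O(U(1))\to\mathcal O(U(1))$ be the injective $*$-Hopf algebra map $u\mapsto u^N$. Then the maps $$\phi(x\otimes h)=x_{(0)}\otimes x_{(1)}\psi(h),\qquad \phi^{-1}\Big(\sum_i x^i\otimes h^i\Big)=\sum_i x^i_{(0)}\otimes\psi^{-1}\big(S(x^i_{(1)})h^i\big)$$ are well-defined mutually inverse $*$-algebra isomorphisms between $\mathcal O(S^3_{pq\theta})\otimes\mathcal O(U(1))$ and the fixed-point algebra $(\mathcal O(S^3_{pq\theta})\otimes\mathcal O(U(1)))^{\mathbb Z/N\mathbb Z}$.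
   Context: $\mathcal O(U(1))=\mathbb C[u,u^{-1}]$ is the Hopf $*$-algebra generated by a group-like unitary $u$, with antipode $S(u)=u^{-1}$; its elements are regarded as functions on $U(1)$. The image of $\psi$ is $\{h\in\mathcal O(U(1))\mid \pi(h_{(1)})\otimes h_{(2)}=1\otimes h\}$ where $\pi(u)=\tilde u$ is the surjection onto $\mathcal O(\mathbb Z/N\mathbb Z)$, $\tilde u^N=1$. Tensor products are algebraic over $\mathbb C$. *)

(* Defs.v *)
From HB Require Import structures.
From mathcomp Require Import all_boot all_order all_algebra.
From mathcomp Require Import finmap.
From mathcomp Require Import complex.
From mathcomp Require Import reals trigo.
Set Implicit Arguments. Unset Strict Implicit. Unset Printing Implicit Defensive.
Import Order.TTheory GRing.Theory Num.Theory.
Local Open Scope ring_scope.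
Local Open Scope complex_scope.


Section Defs.
Variable R : realType.
Local Notation C := R[i].

Definition expi (t : R) : C := (cos t +i* sin t).


Definition is_star (A : algType C) (s : A -> A) : Prop :=
  [/\ forall x y, s (x + y) = s x + s y,
      forall (c : C) x, s (c *: x) = (c^*)%C *: s x,
      forall x y, s (x * y) = s y * s x & forall x, s (s x) = x].

Definition is_star_morph (A B : algType C) (sA : A -> A) (sB : B -> B)
  (f : A -> B) : Prop :=
  [/\ forall x y, f (x + y) = f x + f y,
      forall (c : C) x, f (c *: x) = c *: f x,
      forall x y, f (x * y) = f x * f y,
      f 1 = 1 & forall x, f (sA x) = sB (f x)].

Definition S3_rel (p q th : R) (A : algType C) (s : A -> A) (a b : A) : Prop :=
  [/\ a * b = expi (2 * pi * th) *: (b * a),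
      a * s b = expi (- (2 * pi * th)) *: (s b * a),
      s a * a - p%:C *: (a * s a) = (1 - p)%:C *: 1,
      s b * b - q%:C *: (b * s b) = (1 - q)%:C *: 1
    & (1 - a * s a) * (1 - b * s b) = 0].


(* The algebraic tensor product A (x) O(U(1)) = A (x) C[u,u^-1] is
   identified with finitely supported functions int -> A:
   F  <->  \sum_m F m (x) u^m.                                         *)
Definition tens (A : algType C) := {fsfun int -> A with 0}.

Section Tensor.
Variables (A : algType C) (s : A -> A).

Definition etens (x : A) (m : int) : tens A := [fsfun k in [fset m]%fset => x].
Definition tzero : tens A := [fsfun k in fset0 => (0 : A)].
Definition tadd (F G : tens A) : tens A :=
  [fsfun k in (finsupp F `|` finsupp G)%fset => F k + G k].
Definition tscale (c : C) (F : tens A) : tens A :=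
  [fsfun k in finsupp F => c *: F k].
Definition tone : tens A := etens 1 0.
(* (x (x) h) (y (x) k) = x y (x) h k *)
Definition tmul (F G : tens A) : tens A :=
  [fsfun k in [fset (i + j)%R | i in finsupp F, j in finsupp G]%fset =>
     \sum_(i <- finsupp F) \sum_(j <- finsupp G | (i + j)%R == k) F i * G j].
(* (x (x) u^m)^* = x^* (x) u^-m *)
Definition tstar (F : tens A) : tens A :=
  [fsfun k in [fset (- i)%R | i in finsupp F]%fset => s (F (- k))].
Definition tsum (I : Type) (r : seq I) (F : I -> tens A) : tens A :=
  \big[tadd/tzero]_(i <- r) F i.
End Tensor.

Definition is_coaction (A : algType C) (s : A -> A) (a b : A)
  (delta : A -> tens A) : Prop :=
  [/\ forall x y, delta (x + y) = tadd (delta x) (delta y),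
      forall (c : C) x, delta (c *: x) = tscale c (delta x),
      forall x y, delta (x * y) = tmul (delta x) (delta y),
      delta 1 = tone A &
      forall x, delta (s x) = tstar s (delta x)] /\
  delta a = etens a 1 /\ delta b = etens b 1.

Definition is_universal_S3 (p q th : R) (A : algType C) (s : A -> A) (a b : A)
  : Prop :=
  [/\ is_star s, S3_rel p q th s a b &
      forall (B : algType C) (sB : B -> B) (a' b' : B),
        is_star sB -> S3_rel p q th sB a' b' ->
        (exists f : A -> B, is_star_morph s sB f /\ f a = a' /\ f b = b') /\
        (forall f g : A -> B, is_star_morph s sB f -> is_star_morph s sB g ->
           f a = g a -> f b = g b -> f =1 g)].

Section Maps.
Variables (A : algType C) (s : A -> A) (delta : A -> tens A) (N : nat).

(* U(1)-action: alpha_lambda(x) = x_(0) x_(1)(lambda) *)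
Definition alpha (l : C) (x : A) : A :=
  \sum_(n <- finsupp (delta x)) (l ^ n) *: delta x n.

(* Z/NZ-action on A (x) O(U(1)): x (x) h |-> alpha_zeta x (x) h( . zeta^-1),
   and (u^m)(z zeta^-1) = zeta^-m z^m. *)
Definition zeta (k : nat) : C := expi (2 * pi * k%:R / N%:R).
Definition talpha (z : C) (F : tens A) : tens A :=
  [fsfun m in finsupp F => (z ^ (- m)) *: alpha z (F m)].
Definition fixed (F : tens A) : Prop :=
  forall k : 'I_N, talpha (zeta k) F = F.

(* id (x) psi, psi(u^m) = u^(N m) *)
Definition tpsi (F : tens A) : tens A :=
  [fsfun k in [fset ((N%:Z) * m)%R | m in finsupp F]%fset =>
     F ((k %/ N%:Z)%Z)].
Definition phi (F : tens A) : tens A :=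
  tsum (finsupp F) (fun m => tmul (delta (F m)) (tpsi (etens 1 m))).
(* sum x_(0) (x) S(x_(1)) h, before applying psi^-1; S(u^n) = u^-n *)
Definition phi_pre (F : tens A) : tens A :=
  tsum (finsupp F) (fun m =>
    tsum (finsupp (delta (F m))) (fun n => etens (delta (F m) n) (m - n)%R)).
(* id (x) psi^-1 on A (x) psi(O(U(1))): coefficient of u^k is that of u^(N k) *)
Definition tpsi_inv (G : tens A) : tens A :=
  [fsfun k in [fset ((m %/ N%:Z)%Z) | m in finsupp G]%fset => G ((N%:Z) * k)%R].
Definition phi_inv (F : tens A) : tens A := tpsi_inv (phi_pre F).

Definition is_tmorph (P : tens A -> Prop) (f : tens A -> tens A) : Prop :=
  [/\ forall F G, P F -> P G -> f (tadd F G) = tadd (f F) (f G),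
      forall (c : C) F, P F -> f (tscale c F) = tscale c (f F),
      forall F G, P F -> P G -> f (tmul F G) = tmul (f F) (f G),
      f (tone A) = tone A &
      forall F, P F -> f (tstar s F) = tstar s (f F)].
End Maps.
End Defs.

(* Main.v *)
Require Import Defs.
From HB Require Import structures.
From mathcomp Require Import all_boot all_order all_algebra.
From mathcomp Require Import finmap complex reals trigo boolp.
From mathcomp Require Import ring lra zify.
From Stdlib Require Import ClassicalEpsilon FunctionalExtensionality Classical.
Import Order.TTheory GRing.Theory Num.Theory.
Local Open Scope ring_scope.
Set Implicit Arguments. Unset Strict Implicit. Unset Printing Implicit Defensive.

Section ISum.
Variable V : zmodType.
Definition vanish (f : int -> V) (r : seq int) := forall i, i \notin r -> f i = 0.

Lemma vanish_sub f r r' : vanish f r -> {subset r <= r'} -> vanish f r'.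
Proof. by move=> vf sub i ir'; apply: vf; apply: contra ir'; apply: sub. Qed.

Lemma sum_sub f r r' : vanish f r -> {subset r <= r'} ->
  \sum_(i <- undup r') f i = \sum_(i <- undup r) f i.
Proof.
move=> vf sub.
rewrite (bigID (fun i => i \in r)) /= [X in _ + X]big1 ?addr0; last by move=> i /vf.
rewrite -big_filter; apply: perm_big; apply: uniq_perm.
- by rewrite filter_uniq // undup_uniq.
- exact: undup_uniq.
- move=> x; rewrite mem_filter !mem_undup; apply/andP/idP => [[]//|xr]; split=>//; exact: sub.
Qed.

Definition isum (f : int -> V) : V :=
  match excluded_middle_informative (exists r, vanish f r) with
  | left H => \sum_(i <- undup (proj1_sig (constructive_indefinite_description _ H))) f i
  | right _ => 0 end.

Lemma isumE f r : vanish f r -> isum f = \sum_(i <- undup r) f i.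
Proof.
move=> vr; rewrite /isum; case: excluded_middle_informative => [H|[]]; last by exists r.
case: constructive_indefinite_description => r' vr' /=.
have s1 : {subset r' <= r' ++ r} by move=> i; rewrite mem_cat => ->.
have s2 : {subset r <= r' ++ r} by move=> i; rewrite mem_cat => ->; rewrite orbT.
by rewrite -(sum_sub vr' s1) (sum_sub vr s2).
Qed.

Lemma isumE_uniq f r : vanish f r -> uniq r -> isum f = \sum_(i <- r) f i.
Proof. by move=> vr ur; rewrite (isumE vr) undup_id. Qed.

Lemma isum_eq f g : f =1 g -> isum f = isum g.
Proof. by move=> fg; rewrite (functional_extensionality _ _ fg). Qed.

Lemma isum0 f : (forall i, f i = 0) -> isum f = 0.
Proof. by move=> f0; rewrite (@isumE _ [::]) ?big_nil. Qed.

Lemma isum_add f g rf rg : vanish f rf -> vanish g rg ->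
  isum (fun i => f i + g i) = isum f + isum g.
Proof.
move=> vf vg.
have s1 : {subset rf <= rf ++ rg} by move=> i; rewrite mem_cat => ->.
have s2 : {subset rg <= rf ++ rg} by move=> i; rewrite mem_cat => ->; rewrite orbT.
rewrite (isumE (vanish_sub vf s1)) (isumE (vanish_sub vg s2)) -big_split /=.
apply: isumE => i ir. rewrite (vanish_sub vf s1 ir) (vanish_sub vg s2 ir) addr0. done.
Qed.

Lemma isum_point f c : (forall i, i != c -> f i = 0) -> isum f = f c.
Proof.
move=> fc; rewrite (@isumE _ [:: c]) /= ?big_seq1 //.
by move=> i; rewrite inE; apply: fc.
Qed.

Lemma isum_shift f c r : vanish f r -> isum (fun i => f (i + c)) = isum f.
Proof.
move=> vf; rewrite (isumE vf).
have inj : injective (fun i : int => i - c) by move=> x y /= /addIr.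
rewrite (@isumE _ [seq i - c | i <- r]).
  by rewrite undup_map_inj // big_map; apply: eq_bigr => i _; rewrite subrK.
move=> i ir; apply: vf; apply: contra ir => H.
by apply/mapP; exists (i + c); rewrite // addrK.
Qed.

Lemma isum_neg f r : vanish f r -> isum (fun i => f (- i)) = isum f.
Proof.
move=> vf; rewrite (isumE vf).
have inj : injective (fun i : int => - i) by move=> x y /= /oppr_inj.
rewrite (@isumE _ [seq - i | i <- r]).
  by rewrite undup_map_inj // big_map; apply: eq_bigr => i _; rewrite opprK.
move=> i ir; apply: vf; apply: contra ir => H.
by apply/mapP; exists (- i); rewrite // opprK.
Qed.

Lemma isum_exch (g : int -> int -> V) (r1 r2 : seq int) :
  (forall i j, i \notin r1 -> g i j = 0) -> (forall i j, j \notin r2 -> g i j = 0) ->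
  isum (fun i => isum (g i)) = isum (fun j => isum (fun i => g i j)).
Proof.
move=> h1 h2.
have e1 : forall i, isum (g i) = \sum_(j <- undup r2) g i j.
  by move=> i; apply: isumE => j; apply: h2.
have e2 : forall j, isum (fun i => g i j) = \sum_(i <- undup r1) g i j.
  by move=> j; apply: isumE => i; apply: h1.
rewrite (isum_eq e1) (isum_eq e2).
rewrite (@isumE _ r1); last by move=> i ir; rewrite big1 // => j _; apply: h1.
rewrite (@isumE _ r2); last by move=> j jr; rewrite big1 // => i _; apply: h2.
exact: exchange_big.
Qed.

End ISum.

Lemma isum_map (V W : zmodType) (L : V -> W) f r :
  (forall x y, L (x + y) = L x + L y) -> vanish f r ->
  isum (fun i => L (f i)) = L (isum f).
Proof.
move=> Ladd vf.
have L0 : L 0 = 0 by apply: (@addrI _ (L 0)); rewrite -Ladd !addr0.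
rewrite (isumE vf) (@isumE W _ r); last by move=> i /vf ->.
by rewrite (big_morph L Ladd L0).
Qed.



Section Tens.
Variables (R : realType) (A : algType R[i]).
Local Notation T := (tens A).
Implicit Types F G H : T.

Lemma tensP F G : (forall k, F k = G k) -> F = G.
Proof. by move=> h; apply/fsfunP. Qed.

Lemma fsupp0 F k : k \notin finsupp F -> F k = 0.
Proof. by rewrite memNfinsupp => /eqP. Qed.

Lemma etensE (x : A) m k : etens x m k = if k == m then x else 0.
Proof. by rewrite /etens fsfunE inE. Qed.

Lemma tzeroE k : tzero A k = 0.
Proof. by rewrite /tzero fsfunE inE. Qed.

Lemma taddE F G k : tadd F G k = F k + G k.
Proof.
rewrite /tadd fsfunE in_fsetU; case: ifP => // /negbT.
by rewrite negb_or => /andP[/fsupp0 -> /fsupp0 ->]; rewrite addr0.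
Qed.

Lemma tscaleE c F k : tscale c F k = c *: F k.
Proof. by rewrite /tscale fsfunE; case: ifP => // /negbT /fsupp0 ->; rewrite scaler0. Qed.

Lemma tsumE (I : Type) (r : seq I) (E : I -> T) k :
  tsum r E k = \sum_(i <- r) E i k.
Proof.
elim: r => [|i r IH]; first by rewrite /tsum !big_nil tzeroE.
by rewrite /tsum big_cons taddE; rewrite /tsum in IH; rewrite IH big_cons.
Qed.

Lemma tmulE F G k : tmul F G k = isum (fun i => F i * G (k - i)).
Proof.
rewrite /tmul fsfunE.
rewrite (@isumE_uniq _ _ (finsupp F)); last exact: fset_uniq; last first.
  by move=> i /fsupp0 ->; rewrite mul0r.
have inner : forall i, \sum_(j <- finsupp G | i + j == k) F i * G j = F i * G (k - i).
  move=> i; rewrite big_mkcond /=.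
  rewrite -(@isumE_uniq _ (fun j => if i + j == k then F i * G j else 0) (finsupp G)); last first.
  - exact: fset_uniq.
  - by move=> j /fsupp0 ->; rewrite mulr0 if_same.
  rewrite (@isum_point _ _ (k - i)); first by rewrite addrC subrK eqxx.
  by move=> j jne; case: eqP => // e; rewrite -e (addrC i j) addrK eqxx in jne.
case: ifP => kdom; first by apply: eq_bigr => i _; apply: inner.
symmetry; apply: big1_seq => i /andP[_ iF].
case: (boolP (k - i \in finsupp G)) => kiG; last by rewrite (fsupp0 kiG) mulr0.
move/negbT: kdom => /negP []; apply/imfset2P; exists i => //.
by exists (k - i) => //; rewrite addrC subrK.
Qed.

Variable s : A -> A.
Hypothesis s0 : s 0 = 0.
Lemma tstarE F k : tstar s F k = s (F (- k)).
Proof.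
rewrite /tstar fsfunE; case: ifP => // /negbT kn.
rewrite fsupp0 ?s0 //; apply: contra kn => H.
by rewrite -[k]opprK; apply: (in_imfset _ (fun i : int => - i) H).
Qed.

Variable N : nat.
Hypothesis N0 : (0 < N)%N.
Lemma Nnz : N%:Z != 0. Proof. by rewrite eqz_nat -lt0n. Qed.

Lemma tpsiE F k : tpsi N F k = if (N%:Z %| k)%Z then F (k %/ N%:Z)%Z else 0.
Proof.
rewrite /tpsi fsfunE; case: ifP => [kin|kn].
  case/imfsetP: kin => m _ ->; rewrite dvdz_mulr ?dvdzz //.
case: ifP => // dv; rewrite fsupp0 //; apply: contra (negbT kn) => H.
by rewrite -{1}(divzK dv) mulrC; apply: (in_imfset _ (fun m : int => N%:Z * m) H).
Qed.

Lemma tpsi_invE G k : tpsi_inv N G k = G (N%:Z * k).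
Proof.
rewrite /tpsi_inv fsfunE; case: ifP => // /negbT kn.
symmetry; apply: fsupp0; apply: contra kn => H.
by rewrite -[X in X \in _](mulKz k Nnz); apply: (in_imfset _ (fun m : int => (m %/ N%:Z)%Z) H).
Qed.

End Tens.


Section TensAlg.
Variables (R : realType) (A : algType R[i]).
Local Notation T := (tens A).
Implicit Types F G H : T.

Lemma vanish_supp F : vanish (fun k => F k) (finsupp F).
Proof. by move=> k /fsupp0. Qed.

Lemma vanish_mull F (g : int -> A) : vanish (fun i => F i * g i) (finsupp F).
Proof. by move=> k /fsupp0 ->; rewrite mul0r. Qed.

Lemma vanish_mulr F (g : int -> A) : vanish (fun i => g i * F i) (finsupp F).
Proof. by move=> k /fsupp0 ->; rewrite mulr0. Qed.

Lemma tmul_etens (x y : A) i j : tmul (etens x i) (etens y j) = etens (x * y) (i + j).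
Proof.
apply: tensP => k; rewrite tmulE (@isum_point _ _ i); last first.
  by move=> l li; rewrite etensE (negbTE li) mul0r.
rewrite !etensE eqxx (addrC i j) -subr_eq.
by case: ifP => //; rewrite mulr0.
Qed.

Lemma tmul_addl F G H : tmul (tadd F G) H = tadd (tmul F H) (tmul G H).
Proof.
apply: tensP => k; rewrite taddE !tmulE -(isum_add (@vanish_mull F _) (@vanish_mull G _)).
by apply: isum_eq => i; rewrite taddE mulrDl.
Qed.

Lemma tmul_addr F G H : tmul F (tadd G H) = tadd (tmul F G) (tmul F H).
Proof.
apply: tensP => k; rewrite taddE !tmulE -(isum_add (@vanish_mull F _) (@vanish_mull F _)).
by apply: isum_eq => i; rewrite taddE mulrDr.
Qed.

Lemma tmul_0l G : tmul (tzero A) G = tzero A.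
Proof. by apply: tensP => k; rewrite tmulE tzeroE; apply: isum0 => i; rewrite tzeroE mul0r. Qed.

Lemma tmul_0r F : tmul F (tzero A) = tzero A.
Proof. by apply: tensP => k; rewrite tmulE tzeroE; apply: isum0 => i; rewrite tzeroE mulr0. Qed.

Lemma tadd0l F : tadd (tzero A) F = F.
Proof. by apply: tensP => k; rewrite taddE tzeroE add0r. Qed.

Lemma tadd0r F : tadd F (tzero A) = F.
Proof. by apply: tensP => k; rewrite taddE tzeroE addr0. Qed.

Lemma etens0 m : etens (0 : A) m = tzero A.
Proof. by apply: tensP => k; rewrite etensE tzeroE if_same. Qed.

Lemma etens_add (x y : A) m : tadd (etens x m) (etens y m) = etens (x + y) m.
Proof. by apply: tensP => k; rewrite taddE !etensE; case: ifP; rewrite ?addr0. Qed.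

Lemma tscale_etens c (x : A) m : tscale c (etens x m) = etens (c *: x) m.
Proof. by apply: tensP => k; rewrite tscaleE !etensE; case: ifP; rewrite ?scaler0. Qed.

Lemma tscale0 c : tscale c (tzero A) = tzero A.
Proof. by apply: tensP => k; rewrite tscaleE tzeroE scaler0. Qed.

Lemma tscale_add c F G : tscale c (tadd F G) = tadd (tscale c F) (tscale c G).
Proof. by apply: tensP => k; rewrite !(taddE, tscaleE) scalerDr. Qed.

Lemma tsum_etens (I : Type) (r : seq I) (f : I -> A) m :
  tsum r (fun i => etens (f i) m) = etens (\sum_(i <- r) f i) m.
Proof.
apply: tensP => k; rewrite tsumE etensE; case: ifP => km.
  by apply: eq_bigr => i _; rewrite etensE km.
by apply: big1 => i _; rewrite etensE km.
Qed.

Variable s : A -> A.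
Hypothesis sD : forall x y, s (x + y) = s x + s y.
Lemma s0 : s 0 = 0.
Proof. by apply: (@addrI _ (s 0)); rewrite -sD !addr0. Qed.

Lemma tstar_etens (x : A) m : tstar s (etens x m) = etens (s x) (- m).
Proof.
apply: tensP => k; rewrite (tstarE s0) !etensE eqr_oppLR.
by case: ifP => //; rewrite s0.
Qed.

Lemma tstar0 : tstar s (tzero A) = tzero A.
Proof. by apply: tensP => k; rewrite (tstarE s0) !tzeroE s0. Qed.

Lemma tstar_add F G : tstar s (tadd F G) = tadd (tstar s F) (tstar s G).
Proof. by apply: tensP => k; rewrite !(taddE, tstarE s0) sD. Qed.

Lemma tsum_ind (Q : T -> Prop) (I : Type) (r : seq I) (E : I -> T) :
  Q (tzero A) -> (forall F G, Q F -> Q G -> Q (tadd F G)) ->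
  (forall i, Q (E i)) -> Q (tsum r E).
Proof.
move=> Q0 QD QE; elim: r => [|i r IH]; first by rewrite /tsum big_nil.
by rewrite /tsum big_cons; apply: QD.
Qed.

End TensAlg.



Section Isum_lin.
Variables (R : realType) (A : algType R[i]).
Lemma isum_mull (c : A) f r : vanish f r -> isum (fun i => c * f i) = c * isum f.
Proof. by move=> vf; apply: (@isum_map _ _ (fun z => c * z)) vf => x y; rewrite mulrDr. Qed.
Lemma isum_mulr (c : A) f r : vanish f r -> isum (fun i => f i * c) = isum f * c.
Proof. by move=> vf; apply: (@isum_map _ _ (fun z => z * c)) vf => x y; rewrite mulrDl. Qed.
Lemma isum_scale (c : R[i]) (f : int -> A) r : vanish f r -> isum (fun i => c *: f i) = c *: isum f.
Proof. by move=> vf; apply: (@isum_map _ _ (fun z => c *: z)) vf => x y; rewrite scalerDr. Qed.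
Lemma tsum_ext (I : Type) (r : seq I) (E E' : I -> tens A) :
  (forall i, E i = E' i) -> tsum r E = tsum r E'.
Proof. by move=> h; rewrite (functional_extensionality _ _ h). Qed.
End Isum_lin.

Section Delta.
Variables (R : realType) (p q th : R) (A : algType R[i]) (s : A -> A) (a b : A)
  (delta : A -> tens A).
Hypothesis univ : is_universal_S3 p q th s a b.
Hypothesis coac : is_coaction s a b delta.

Lemma sstar : is_star s. Proof. by case: univ. Qed.
Lemma sD x y : s (x + y) = s x + s y. Proof. by case: sstar. Qed.
Let s0 := s0 sD.

Lemma dD x y n : delta (x + y) n = delta x n + delta y n.
Proof. by case: coac => -[h _ _ _ _] _; rewrite h taddE. Qed.
Lemma dZ c x n : delta (c *: x) n = c *: delta x n.
Proof. by case: coac => -[_ h _ _ _] _; rewrite h tscaleE. Qed.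
Lemma d0 n : delta 0 n = 0.
Proof. by apply: (@addrI _ (delta 0 n)); rewrite -dD !addr0. Qed.
Lemma delta0 : delta 0 = tzero A.
Proof. by apply: tensP => k; rewrite d0 tzeroE. Qed.
Lemma deltaD x y : delta (x + y) = tadd (delta x) (delta y).
Proof. by case: coac => -[h _ _ _ _] _; rewrite h. Qed.
Lemma deltaZ c x : delta (c *: x) = tscale c (delta x).
Proof. by case: coac => -[_ h _ _ _] _; rewrite h. Qed.
Lemma deltaM x y : delta (x * y) = tmul (delta x) (delta y).
Proof. by case: coac => -[_ _ h _ _] _; rewrite h. Qed.
Lemma deltaS x : delta (s x) = tstar s (delta x).
Proof. by case: coac => -[_ _ _ _ h] _; rewrite h. Qed.
Lemma delta1 : delta 1 = etens 1 0.
Proof. by case: coac => -[_ _ _ h _] _; rewrite h. Qed.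
Lemma deltaa : delta a = etens a 1.
Proof. by case: coac => _ []. Qed.
Lemma deltab : delta b = etens b 1.
Proof. by case: coac => _ []. Qed.
Lemma dM x y k : delta (x * y) k = isum (fun i => delta x i * delta y (k - i)).
Proof. by rewrite deltaM tmulE. Qed.
Lemma dS x k : delta (s x) k = s (delta x (- k)).
Proof. by rewrite deltaS (tstarE s0). Qed.
Lemma delta_sum (I : Type) (r : seq I) (f : I -> A) :
  delta (\sum_(i <- r) f i) = tsum r (fun i => delta (f i)).
Proof.
elim: r => [|i r IH]; first by rewrite big_nil delta0 /tsum big_nil.
by rewrite big_cons deltaD IH /tsum big_cons.
Qed.
Lemma vanish_d x : vanish (fun n => delta x n) (finsupp (delta x)).
Proof. exact: vanish_supp. Qed.

Definition good x := (forall n, delta (delta x n) = etens (delta x n) n) /\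
  isum (fun n => delta x n) = x.

Lemma good_gen x m : delta x = etens x m -> good x.
Proof.
move=> dx; rewrite /good dx; split.
  by move=> n; rewrite etensE; case: eqP => [->|_]; rewrite ?dx ?delta0 ?etens0.
by rewrite (@isum_point _ _ m) ?etensE ?eqxx // => i im; rewrite etensE (negbTE im).
Qed.

Lemma good0 : good 0.
Proof. by apply: (@good_gen _ 0); rewrite delta0 etens0. Qed.
Lemma good1 : good 1.
Proof. exact: (good_gen delta1). Qed.
Lemma gooda : good a.
Proof. exact: (good_gen deltaa). Qed.
Lemma goodb : good b.
Proof. exact: (good_gen deltab). Qed.

Lemma goodD x y : good x -> good y -> good (x + y).
Proof.
move=> [hx sx] [hy sy]; split.
  by move=> n; rewrite dD deltaD hx hy etens_add.
rewrite -{2}sx -{2}sy -(isum_add (@vanish_d x) (@vanish_d y)).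
by apply: isum_eq => n; rewrite dD.
Qed.

Lemma goodZ c x : good x -> good (c *: x).
Proof.
move=> [hx sx]; split.
  by move=> n; rewrite dZ deltaZ hx tscale_etens.
rewrite -{2}sx -(isum_scale c (@vanish_d x)).
by apply: isum_eq => n; rewrite dZ.
Qed.

Lemma goodS x : good x -> good (s x).
Proof.
move=> [hx sx]; split.
  by move=> n; rewrite dS deltaS hx (tstar_etens sD); congr etens; apply: opprK.
transitivity (isum (fun n => s (delta x (- n)))); first by apply: isum_eq => n; exact: dS.
have vs : vanish (fun n => s (delta x n)) (finsupp (delta x)).
  by move=> n /fsupp0 ->; rewrite s0.
rewrite (isum_neg vs) -{2}sx.
exact: (@isum_map _ _ s _ _ sD (@vanish_d x)).
Qed.

Lemma goodM x y : good x -> good y -> good (x * y).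
Proof.
move=> [hx sx] [hy sy].
have e : forall n, delta (x * y) n =
  \sum_(i <- finsupp (delta x)) delta x i * delta y (n - i).
  move=> n; rewrite dM; apply: isumE_uniq; last exact: fset_uniq.
  exact: vanish_mull.
split.
  move=> n; rewrite e delta_sum.
  rewrite (@tsum_ext _ _ _ _ _ (fun i => etens (delta x i * delta y (n - i)) n)).
    exact: tsum_etens.
  by move=> i; rewrite deltaM hx hy tmul_etens (addrC i (n - i)) subrK.
transitivity (isum (fun n => isum (fun i => delta x i * delta y (n - i)))).
  by apply: isum_eq => n; exact: dM.
rewrite (@isum_exch _ _ [seq i + j | i <- finsupp (delta x), j <- finsupp (delta y)]
   (finsupp (delta x))); last first.
- by move=> n i /fsupp0 ->; rewrite mul0r.
- move=> n i nr; case: (boolP (i \in finsupp (delta x))) => ix; last by rewrite (fsupp0 ix) mul0r.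
  case: (boolP (n - i \in finsupp (delta y))) => iy; last by rewrite (fsupp0 iy) mulr0.
  by move: nr; have := allpairs_f (fun i j : int => i + j) ix iy; rewrite addrC subrK => ->.
have inner : forall i, isum (fun n => delta x i * delta y (n - i)) = delta x i * y.
  move=> i; transitivity (delta x i * isum (fun n => delta y n)); last by rewrite sy.
  rewrite -(isum_mull (delta x i) (@vanish_d y)).
  exact: (@isum_shift _ (fun n => delta x i * delta y n) (- i) _ (@vanish_mulr _ _ (delta y) (fun _ => delta x i))).
by rewrite (isum_eq inner) (isum_mulr y (@vanish_d x)) sx.
Qed.


Definition Sp : {pred A} := fun x => `[< good x >].
Lemma Sp_closed : GRing.subsemialg_closed Sp.
Proof.
split.
- by apply/asboolP; apply: good1.
- split; first by apply/asboolP; apply: good0.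
  by move=> x y /asboolP ? /asboolP ?; apply/asboolP; apply: goodD.
- by move=> c x /asboolP ?; apply/asboolP; apply: goodZ.
- by move=> x y /asboolP ? /asboolP ?; apply/asboolP; apply: goodM.
Qed.
HB.instance Definition _ := GRing.isSubalgClosed.Build R[i] A Sp Sp_closed.
Record subA := SubA { sval : A; _ : sval \in Sp }.
HB.instance Definition _ := [isSub for sval].
HB.instance Definition _ := [Choice of subA by <:].
HB.instance Definition _ := [SubChoice_isSubAlgebra of subA by <:].

Lemma SpS x : x \in Sp -> s x \in Sp.
Proof. by move=> /asboolP gx; apply/asboolP; apply: goodS. Qed.
Definition sB (u : subA) : subA := SubA (SpS (valP u)).
Lemma Spa : a \in Sp. Proof. by apply/asboolP; apply: gooda. Qed.
Lemma Spb : b \in Sp. Proof. by apply/asboolP; apply: goodb. Qed.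

Lemma all_good x : good x.
Proof.
case: univ => sst rel U.
have sBstar : is_star sB.
  case: sst => h1 h2 h3 h4.
  by split => *; apply: val_inj => /=; rewrite ?h1 ?h2 ?h3 ?h4.
have relB : S3_rel p q th sB (SubA Spa) (SubA Spb).
  case: rel => r1 r2 r3 r4 r5.
  by split; apply: val_inj => /=.
have [[f [[fD fZ fM f1 fS] [fa fb]]] _] := U subA sB _ _ sBstar relB.
have [_ uniq] := U A s a b sst rel.
have gm : is_star_morph s s (fun x => sval (f x)).
  by split => *; rewrite ?fD ?fZ ?fM ?f1 ?fS.
have idm : is_star_morph s s id by split.
have := uniq _ _ gm idm; rewrite fa fb => /(_ erefl erefl x) /= <-.
by apply/asboolP; apply: (valP (f x)).
Qed.

End Delta.


Section Roots.
Variable R : realType.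
Local Open Scope complex_scope.

Lemma expi0 : expi (0 : R) = 1.
Proof. by rewrite /expi cos0 sin0. Qed.

Lemma expiD (x y : R) : expi (x + y) = expi x * expi y.
Proof.
rewrite /expi cosD sinD /= [RHS]/GRing.mul /=.
by congr (_ +i* _); rewrite addrC.
Qed.

Lemma expi_neq0 (x : R) : expi x != 0.
Proof.
apply/eqP => h; have := expiD x (- x).
by rewrite subrr expi0 h mul0r => /eqP; rewrite oner_eq0.
Qed.

Lemma expiN (x : R) : expi (- x) = (expi x)^-1.
Proof.
apply: (mulfI (expi_neq0 x)); rewrite -expiD subrr expi0 mulfV //.
exact: expi_neq0.
Qed.

Lemma expi_natpow (x : R) n : expi x ^+ n = expi (n%:R * x).
Proof.
elim: n => [|n IH]; first by rewrite expr0 mul0r expi0.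
by rewrite exprS IH -expiD -natr1 mulrDl mul1r addrC.
Qed.

Lemma expi_pow (x : R) (z : int) : expi x ^ z = expi (z%:~R * x).
Proof.
case: z => n; first by rewrite -exprnP expi_natpow.
rewrite NegzE intrN mulNr expiN -expi_natpow.
by [].
Qed.

Lemma expi_2pi (z : int) : expi (z%:~R * (2 * pi)) = (1 : R[i]).
Proof.
rewrite -expi_pow mulr_natl /expi cos2pi sin2pi.
exact: exp1rz.
Qed.

Variable N : nat.
Hypothesis N0 : (0 < N)%N.

Lemma zeta_neq0 k : zeta R N k != 0.
Proof. exact: expi_neq0. Qed.

Lemma zeta_unit k : zeta R N k \is a GRing.unit.
Proof. by rewrite unitfE zeta_neq0. Qed.

Lemma zeta_dvd k (j : int) : (N%:Z %| j)%Z -> zeta R N k ^ j = 1.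
Proof.
move=> dv; rewrite /zeta expi_pow.
have NR : (N%:R : R) != 0 by rewrite pnatr_eq0 -lt0n.
rewrite -(divzK dv) -[X in expi X](_ : ((j %/ N%:Z)%Z * k%:Z)%:~R * (2 * pi) = _).
  exact: expi_2pi.
rewrite !intrM /=.
have -> : ((N%:Z)%:~R : R) = N%:R by [].
have -> : ((k%:Z)%:~R : R) = k%:R by [].
by field.
Qed.

Lemma zeta1_ndvd (d : int) : (1 < N)%N -> ~~ (N%:Z %| d)%Z -> zeta R N 1 ^ d != 1.
Proof.
move=> N1 ndv; apply/eqP => h.
have Nz : N%:Z != 0 by rewrite eqz_nat -lt0n.
have NR : (0 : R) < N%:R by rewrite ltr0n.
set r := (d %% N%:Z)%Z.
have r0 : 0 <= r by apply: modz_ge0.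
have rN : r < N%:Z by have := ltz_mod d Nz.
have rn0 : r != 0 by apply: contra ndv => /eqP r0'; apply/dvdz_mod0P.
move: h; rewrite {1}(divz_eq d N%:Z) (exprzDr (zeta_unit _)).
rewrite zeta_dvd ?dvdz_mull ?dvdzz // mul1r /zeta expi_pow.
set t := (r%:~R * _) => h.
have ct : cos t = 1.
  by have := congr1 (@complex.Re _) h; rewrite /expi /=.
have rR : (0 : R) < r%:~R by rewrite ltr0z lt_def rn0.
have rRN : (r%:~R : R) < N%:R by have := rN; rewrite -(ltr_int R) => H.
have pi0 := pi_gt0 R.
have NR0 : (N%:R : R) != 0 by rewrite gt_eqF.
have e : t / 2 = pi * (r%:~R / N%:R) by rewrite /t; field.
have rlt : r%:~R / N%:R < 1 :> R by rewrite ltr_pdivrMr // mul1r.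
have rgt : 0 < r%:~R / N%:R :> R by apply: divr_gt0.
have t2 : 0 < t / 2 < pi.
  rewrite e; apply/andP; split; first exact: mulr_gt0.
  by rewrite -[X in _ < X]mulr1 ltr_pM2l.
have s2 := sin_gt0_pi t2.
have : cos t = 1 - 2 * sin (t / 2) ^+ 2.
  have -> : t = t / 2 + t / 2 by field.
  rewrite cosD; have := cos2Dsin2 (t / 2).
  have -> : (t / 2 + t / 2) / 2 = t / 2 by field.
  move=> e2; rewrite -[cos (t/2) * cos (t/2)]expr2 -[sin _ * sin _]expr2. lra.
rewrite ct => e3.
have : 0 < sin (t / 2) ^+ 2 by apply: exprn_gt0.
lra.
Qed.

End Roots.


Section Main.
Variables (R : realType) (p q th : R) (N : nat) (A : algType R[i]) (s : A -> A)
  (a b : A) (delta : A -> tens A).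
Hypothesis univ : is_universal_S3 p q th s a b.
Hypothesis coac : is_coaction s a b delta.
Hypothesis N0 : (0 < N)%N.
Local Notation T := (tens A).
Implicit Types F G H : T.

Let sD := sD univ.
Let s0 := s0 sD.
Let dD := dD coac.
Let dZ := dZ coac.
Let d0 := d0 coac.
Let delta0 := delta0 coac.
Let Nnz : N%:Z != 0 := Nnz N0.
Let delta_sum := delta_sum coac.
Let deltaM := deltaM coac.
Let deltaS := deltaS coac.
Let delta1 := delta1 coac.
Let deltaD := deltaD coac.
Let deltaZ := deltaZ coac.
Let tstar_etens := tstar_etens sD.
Let tstar_add := tstar_add sD.
Let tstar0 := tstar0 sD.
Let tstarE := tstarE s0.
Let tpsiE := @tpsiE R A N.
Let tpsi_invE := @tpsi_invE R A N N0.
Let zeta_dvd := zeta_dvd R N0.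
Let zeta1_ndvd := zeta1_ndvd R N0.

Lemma DD x j n : delta (delta x j) n = if n == j then delta x j else 0.
Proof. by have [h _] := all_good univ coac x; rewrite h etensE. Qed.
Lemma isumD x : isum (fun n => delta x n) = x.
Proof. by have [_ h] := all_good univ coac x. Qed.

Lemma vanish_F F (g : int -> A -> A) : (forall i, g i 0 = 0) ->
  vanish (fun m => g m (F m)) (finsupp F).
Proof. by move=> g0 m /fsupp0 ->. Qed.

Lemma d_isum f r : vanish f r -> forall n, delta (isum f) n = isum (fun j => delta (f j) n).
Proof.
move=> vf n; rewrite (isumE vf) delta_sum tsumE; symmetry; apply: isumE.
by move=> j /vf ->; rewrite d0.
Qed.

Definition hom x n := delta x = etens x n.

Lemma homM x y n n' : hom x n -> hom y n' -> hom (x * y) (n + n').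
Proof. by rewrite /hom deltaM => -> ->; rewrite tmul_etens. Qed.
Lemma homS x n : hom x n -> hom (s x) (- n).
Proof. by rewrite /hom deltaS => ->; rewrite tstar_etens. Qed.
Lemma hom1 : hom 1 0.
Proof. exact: delta1. Qed.
Lemma homD x n k : hom x n -> delta x k = if k == n then x else 0.
Proof. by rewrite /hom => ->; rewrite etensE. Qed.

Lemma piece_ind (Q : T -> Prop) (Pc : int -> int -> Prop) :
  Q (tzero A) -> (forall F G, Q F -> Q G -> Q (tadd F G)) ->
  (forall x m n, hom x n -> Pc m n -> Q (etens x m)) ->
  forall F, (forall m n, ~ Pc m n -> delta (F m) n = 0) -> Q F.
Proof.
move=> Q0 QD QE F hF.
have -> : F = tsum (finsupp F) (fun m =>
    tsum (finsupp (delta (F m))) (fun n => etens (delta (F m) n) m)).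
  apply: tensP => k; rewrite tsumE.
  under eq_bigr => m _ do rewrite tsum_etens.
  rewrite -(@isumE_uniq _ (fun m => etens (\sum_(n <- finsupp (delta (F m))) delta (F m) n) m k)); last first.
  - exact: fset_uniq.
  - by move=> m /fsupp0 ->; rewrite delta0 big1 ?etens0 ?tzeroE // => n _; rewrite tzeroE.
  rewrite (@isum_point _ _ k); last by move=> m mk; rewrite etensE eq_sym (negbTE mk).
  rewrite etensE eqxx -(@isumE_uniq _ _ _ (@vanish_supp _ _ (delta (F k)))) ?fset_uniq //.
  by rewrite isumD.
apply: tsum_ind => // m; apply: tsum_ind => // n.
case: (classic (Pc m n)) => [Pmn|nP]; first apply: (QE _ _ n _ Pmn); rewrite /hom; have [h _] := all_good univ coac (F m). exact: (h n).
by rewrite hF // etens0.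
Qed.

Lemma tpsi_etens (x : A) m : tpsi N (etens x m) = etens x (N%:Z * m).
Proof.
apply: tensP => k; rewrite tpsiE !etensE.
case: ifP => dv.
  rewrite -{2}(divzK dv) mulrC; congr (if _ then _ else _).
  by apply/eqP/eqP => [->//|]; apply: mulfI.
case: eqP => // e; move: dv; rewrite e dvdz_mulr ?dvdzz //.
Qed.

Lemma tpsi_add F G : tpsi N (tadd F G) = tadd (tpsi N F) (tpsi N G).
Proof. by apply: tensP => k; rewrite !(taddE, tpsiE); case: ifP; rewrite ?addr0. Qed.

Lemma tpsi0 : tpsi N (tzero A) = tzero A.
Proof. by apply: tensP => k; rewrite tpsiE !tzeroE if_same. Qed.

Lemma tmul_etensr F (y : A) j k : tmul F (etens y j) k = F (k - j) * y.
Proof.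
rewrite tmulE (@isum_point _ _ (k - j)).
  by rewrite etensE opprB addrCA subrr addr0 eqxx.
move=> i ij; rewrite etensE; case: eqP => [e|]; last by rewrite mulr0.
by move: ij; rewrite -e opprB addrCA subrr addr0 eqxx.
Qed.

Lemma phiE F k : phi delta N F k = isum (fun m => delta (F m) (k - N%:Z * m)).
Proof.
rewrite /phi tsumE; symmetry; rewrite (@isumE_uniq _ _ (finsupp F)); last exact: fset_uniq.
  by apply: eq_bigr => m _; rewrite tpsi_etens tmul_etensr mulr1.
by move=> m /fsupp0 ->; rewrite d0.
Qed.

Lemma phi_add F G : phi delta N (tadd F G) = tadd (phi delta N F) (phi delta N G).
Proof.
apply: tensP => k; rewrite taddE !phiE.
rewrite -(isum_add (@vanish_F F (fun m x => delta x (k - N%:Z * m)) (fun m => d0 _))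
                 (@vanish_F G (fun m x => delta x (k - N%:Z * m)) (fun m => d0 _))).
by apply: isum_eq => m; rewrite taddE dD.
Qed.

Lemma phi0 : phi delta N (tzero A) = tzero A.
Proof. by apply: tensP => k; rewrite phiE tzeroE; apply: isum0 => m; rewrite tzeroE d0. Qed.

Lemma phi_scale c F : phi delta N (tscale c F) = tscale c (phi delta N F).
Proof.
apply: tensP => k; rewrite tscaleE !phiE.
rewrite -(isum_scale c (@vanish_F F (fun m x => delta x (k - N%:Z * m)) (fun m => d0 _))).
by apply: isum_eq => m; rewrite tscaleE dZ.
Qed.

Lemma phi_etens x m n : hom x n -> phi delta N (etens x m) = etens x (n + N%:Z * m).
Proof.
move=> hx; apply: tensP => k; rewrite phiE (@isum_point _ _ m).
  by rewrite !etensE eqxx (homD _ hx) subr_eq.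
by move=> j jm; rewrite etensE (negbTE jm) d0.
Qed.

Lemma phi_preE F k : phi_pre delta F k = isum (fun m => delta (F m) (m - k)).
Proof.
rewrite /phi_pre tsumE; symmetry; rewrite (@isumE_uniq _ _ (finsupp F)); last exact: fset_uniq.
  apply: eq_bigr => m _; rewrite tsumE.
  rewrite -(@isumE_uniq _ (fun n => etens (delta (F m) n) (m - n) k) (finsupp (delta (F m)))).
  - rewrite (@isum_point _ _ (m - k)); first by rewrite etensE opprB addrCA subrr addr0 eqxx.
    move=> n nmk; rewrite etensE; case: eqP => // e.
    by move: nmk; rewrite e opprB addrCA subrr addr0 eqxx.
  - by move=> n /fsupp0 ->; rewrite etensE if_same.
  - exact: fset_uniq.
by move=> m /fsupp0 ->; rewrite d0.
Qed.

Lemma phi_invE F k : phi_inv delta N F k = isum (fun m => delta (F m) (m - N%:Z * k)).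
Proof. by rewrite /phi_inv tpsi_invE phi_preE. Qed.

Lemma phi_pre_add F G : phi_pre delta (tadd F G) = tadd (phi_pre delta F) (phi_pre delta G).
Proof.
apply: tensP => k; rewrite taddE !phi_preE.
rewrite -(isum_add (@vanish_F F (fun m x => delta x (m - k)) (fun m => d0 _))
                 (@vanish_F G (fun m x => delta x (m - k)) (fun m => d0 _))).
by apply: isum_eq => m; rewrite taddE dD.
Qed.

Lemma phi_pre0 : phi_pre delta (tzero A) = tzero A.
Proof. by apply: tensP => k; rewrite phi_preE tzeroE; apply: isum0 => m; rewrite tzeroE d0. Qed.

Lemma phi_pre_etens x m n : hom x n -> phi_pre delta (etens x m) = etens x (m - n).
Proof.
move=> hx; apply: tensP => k; rewrite phi_preE (@isum_point _ _ m).
  by rewrite !etensE eqxx (homD _ hx); congr (if _ then _ else _); apply/eqP/eqP; lia.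
by move=> j jm; rewrite etensE (negbTE jm) d0.
Qed.

Lemma phi_inv_add F G : phi_inv delta N (tadd F G) = tadd (phi_inv delta N F) (phi_inv delta N G).
Proof. by apply: tensP => k; rewrite taddE /phi_inv !tpsi_invE phi_pre_add taddE. Qed.

Lemma phi_inv0 : phi_inv delta N (tzero A) = tzero A.
Proof. by apply: tensP => k; rewrite /phi_inv tpsi_invE phi_pre0 !tzeroE. Qed.

Lemma phi_inv_scale c F : phi_inv delta N (tscale c F) = tscale c (phi_inv delta N F).
Proof.
apply: tensP => k; rewrite tscaleE !phi_invE.
rewrite -(isum_scale c (@vanish_F F (fun m x => delta x (m - N%:Z * k)) (fun m => d0 _))).
by apply: isum_eq => m; rewrite tscaleE dZ.
Qed.

Lemma phi_inv_etens x m n j : hom x n -> m - n = N%:Z * j ->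
  phi_inv delta N (etens x m) = etens x j.
Proof.
move=> hx e; apply: tensP => k; rewrite phi_invE (@isum_point _ _ m).
  rewrite !etensE eqxx (homD _ hx); congr (if _ then _ else _).
  apply/eqP/eqP => [h|->]; last by rewrite -e opprB addrCA subrr addr0.
  apply: (mulfI Nnz); rewrite -e -h opprB addrCA subrr addr0 //.
by move=> i im; rewrite etensE (negbTE im) d0.
Qed.


Lemma vanish_sd (z : R[i]) x : vanish (fun n => z ^ n *: delta x n) (finsupp (delta x)).
Proof. by move=> n /fsupp0 ->; rewrite scaler0. Qed.

Lemma alphaE z x : alpha delta z x = isum (fun n => z ^ n *: delta x n).
Proof. by rewrite /alpha (isumE_uniq (@vanish_sd z x)) ?fset_uniq. Qed.

Lemma alpha0 z : alpha delta z 0 = 0.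
Proof. by rewrite alphaE; apply: isum0 => n; rewrite d0 scaler0. Qed.

Lemma alpha_add z x y : alpha delta z (x + y) = alpha delta z x + alpha delta z y.
Proof.
rewrite !alphaE -(isum_add (@vanish_sd z x) (@vanish_sd z y)).
by apply: isum_eq => n; rewrite dD scalerDr.
Qed.

Lemma alpha_hom z x n : hom x n -> alpha delta z x = z ^ n *: x.
Proof.
move=> hx; rewrite alphaE (@isum_point _ _ n) ?(homD _ hx) ?eqxx //.
by move=> j /negbTE jn; rewrite (homD _ hx) jn scaler0.
Qed.

Lemma talphaE z F k : talpha delta z F k = z ^ (- k) *: alpha delta z (F k).
Proof. by rewrite /talpha fsfunE; case: ifP => // /negbT /fsupp0 ->; rewrite alpha0 scaler0. Qed.

Lemma talpha_add z F G : talpha delta z (tadd F G) = tadd (talpha delta z F) (talpha delta z G).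
Proof. by apply: tensP => k; rewrite !(taddE, talphaE) alpha_add scalerDr. Qed.

Lemma talpha0 z : talpha delta z (tzero A) = tzero A.
Proof. by apply: tensP => k; rewrite talphaE !tzeroE alpha0 scaler0. Qed.

Lemma talpha_etens z x j n : hom x n ->
  talpha delta z (etens x j) = etens ((z ^ (- j) * z ^ n) *: x) j.
Proof.
move=> hx; apply: tensP => k; rewrite talphaE !etensE.
by case: eqP => [->|_]; rewrite ?(alpha_hom _ hx) ?scalerA ?alpha0 ?scaler0.
Qed.

Lemma fixed0 : fixed delta N (tzero A).
Proof. by move=> k; rewrite talpha0. Qed.

Lemma fixedD F G : fixed delta N F -> fixed delta N G -> fixed delta N (tadd F G).
Proof. by move=> fF fG k; rewrite talpha_add fF fG. Qed.

Lemma fixed_etens x j n : hom x n -> (N%:Z %| n - j)%Z -> fixed delta N (etens x j).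
Proof.
move=> hx dv k; rewrite (talpha_etens _ _ hx) mulrC -exprzDr ?zeta_unit //.
by rewrite zeta_dvd // scale1r.
Qed.

Lemma FixV F m n : fixed delta N F -> ~~ (N%:Z %| n - m)%Z -> delta (F m) n = 0.
Proof.
move=> fx ndv.
have Nne1 : N != 1%N by apply: contra ndv => /eqP ->; apply: dvd1z.
have N1 : (1 < N)%N by move: N0 Nne1; lia.
have := fx (Ordinal N1) => /(congr1 (fun G => delta (G m) n)).
rewrite talphaE dZ alphaE (d_isum (@vanish_sd _ _)) /=.
rewrite (@isum_point _ _ n); last first.
  by move=> j jn; rewrite dZ DD eq_sym (negbTE jn) scaler0.
rewrite dZ DD eqxx scalerA -exprzDr ?zeta_unit // addrC => h.
have : ((zeta R N 1 ^ (n - m) - 1) *: delta (F m) n == 0).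
  by rewrite scalerBl scale1r h subrr.
rewrite scaler_eq0 subr_eq0 (negbTE (zeta1_ndvd N1 ndv)) /=.
by move/eqP.
Qed.

Lemma dv_eq m n : (N%:Z %| n - m)%Z -> m - n = N%:Z * (- ((n - m) %/ N%:Z)%Z).
Proof. by move=> dv; rewrite mulrN; apply: oppr_inj; rewrite opprK opprB mulrC divzK. Qed.

Definition Pcf (m n : int) : Prop := (N%:Z %| n - m)%Z.

Lemma fixed_hF F : fixed delta N F -> forall m n, ~ Pcf m n -> delta (F m) n = 0.
Proof. by move=> fx m n /negP; apply: FixV. Qed.

Lemma true_hF F : forall m n, ~ (fun _ _ => True) m n -> delta (F m) n = 0.
Proof. by move=> m n []. Qed.


Lemma ind_all (Q : T -> Prop) :
  Q (tzero A) -> (forall F G, Q F -> Q G -> Q (tadd F G)) ->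
  (forall x m n, hom x n -> Q (etens x m)) -> forall F, Q F.
Proof.
move=> Q0 QD QE F; apply: (@piece_ind Q (fun _ _ => True)) => //.
- by move=> x m n hx _; apply: QE hx.
Qed.

Lemma ind_fix (Q : T -> Prop) :
  Q (tzero A) -> (forall F G, Q F -> Q G -> Q (tadd F G)) ->
  (forall x m n, hom x n -> Pcf m n -> Q (etens x m)) -> forall F, fixed delta N F -> Q F.
Proof.
move=> Q0 QD QE F fx; apply: (@piece_ind Q Pcf) => //.
exact: fixed_hF.
Qed.

Lemma part1 F : fixed delta N F -> phi_pre delta F = tpsi N (phi_inv delta N F).
Proof.
move=> fx; apply: (@piece_ind (fun F => phi_pre delta F = tpsi N (phi_inv delta N F)) Pcf _ _ _ F (fixed_hF fx)).
- by rewrite phi_pre0 phi_inv0 tpsi0.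
- by move=> G H eG eH; rewrite phi_pre_add phi_inv_add tpsi_add eG eH.
move=> x m n hx pc; rewrite (phi_pre_etens _ hx) (phi_inv_etens hx (dv_eq pc)) tpsi_etens.
by rewrite -(dv_eq pc).
Qed.

Lemma part2 F : fixed delta N (phi delta N F).
Proof.
apply: (@piece_ind (fun F => fixed delta N (phi delta N F)) (fun _ _ => True) _ _ _ F (@true_hF F)).
- by rewrite phi0; apply: fixed0.
- by move=> G H eG eH; rewrite phi_add; apply: fixedD.
move=> x m n hx _; rewrite (phi_etens _ hx); apply: (fixed_etens hx).
by rewrite opprD addrA subrr add0r -mulrN dvdz_mulr ?dvdzz.
Qed.

Lemma phi_mul F G : phi delta N (tmul F G) = tmul (phi delta N F) (phi delta N G).
Proof.
move: G F; apply: ind_all.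
- by move=> F; rewrite tmul_0r phi0 tmul_0r.
- by move=> G H eG eH F; rewrite tmul_addr !phi_add eG eH tmul_addr.
move=> y m' n' hy; apply: ind_all.
- by rewrite tmul_0l phi0 tmul_0l.
- by move=> G H eG eH; rewrite tmul_addl !phi_add eG eH tmul_addl.
move=> x m n hx.
rewrite tmul_etens (phi_etens _ (homM hx hy)) (phi_etens _ hx) (phi_etens _ hy) tmul_etens.
by congr etens; ring.
Qed.

Lemma phi_star F : phi delta N (tstar s F) = tstar s (phi delta N F).
Proof.
move: F; apply: ind_all.
- by rewrite tstar0 phi0 tstar0.
- by move=> G H eG eH; rewrite tstar_add !phi_add eG eH tstar_add.
move=> x m n hx.
rewrite tstar_etens (phi_etens _ (homS hx)) (phi_etens _ hx) tstar_etens.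
by congr etens; ring.
Qed.

Lemma phi_inv_mul F G : fixed delta N F -> fixed delta N G ->
  phi_inv delta N (tmul F G) = tmul (phi_inv delta N F) (phi_inv delta N G).
Proof.
move=> fF fG; move: G fG F fF; apply: ind_fix.
- by move=> F _; rewrite tmul_0r phi_inv0 tmul_0r.
- by move=> G H eG eH F fF; rewrite tmul_addr !phi_inv_add eG // eH // tmul_addr.
move=> y m' n' hy pc'; apply: ind_fix.
- by rewrite tmul_0l phi_inv0 tmul_0l.
- by move=> G H eG eH; rewrite tmul_addl !phi_inv_add eG eH tmul_addl.
move=> x m n hx pc.
rewrite tmul_etens (phi_inv_etens hx (dv_eq pc)) (phi_inv_etens hy (dv_eq pc')) tmul_etens.
apply: (phi_inv_etens (homM hx hy)).
by rewrite mulrDr -(dv_eq pc) -(dv_eq pc'); ring.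
Qed.

Lemma phi_inv_star F : fixed delta N F ->
  phi_inv delta N (tstar s F) = tstar s (phi_inv delta N F).
Proof.
move: F; apply: ind_fix.
- by rewrite tstar0 phi_inv0 tstar0.
- by move=> G H eG eH; rewrite tstar_add !phi_inv_add eG eH tstar_add.
move=> x m n hx pc.
rewrite tstar_etens (phi_inv_etens hx (dv_eq pc)) tstar_etens.
apply: (phi_inv_etens (homS hx)).
by rewrite mulrN -(dv_eq pc); ring.
Qed.

Lemma part5 F : phi_inv delta N (phi delta N F) = F.
Proof.
move: F; apply: ind_all.
- by rewrite phi0 phi_inv0.
- by move=> G H eG eH; rewrite phi_add phi_inv_add eG eH.
move=> x m n hx; rewrite (phi_etens _ hx); apply: (phi_inv_etens hx).
by ring.
Qed.

Lemma part6 G : fixed delta N G -> phi delta N (phi_inv delta N G) = G.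
Proof.
move: G; apply: ind_fix.
- by rewrite phi_inv0 phi0.
- by move=> G H eG eH; rewrite phi_inv_add phi_add eG eH.
move=> x m n hx pc; rewrite (phi_inv_etens hx (dv_eq pc)) (phi_etens _ hx).
by rewrite -(dv_eq pc) addrC subrK.
Qed.

End Main.


Unset Implicit Arguments. Set Strict Implicit.

Theorem mainTheorem11 (R : realType) (p q th : R) (N : nat)
  (A : algType R[i]) (s : A -> A) (a b : A) (delta : A -> tens A) :
  0 <= p < 1 -> 0 <= q < 1 -> 0 < th < 1 -> irrational th -> (0 < N)%N ->
  is_universal_S3 p q th s a b ->
  is_coaction s a b delta ->
  (* phi^-1 is well defined: on fixed points, sum x_(0) (x) S(x_(1)) h
     lies in A (x) psi(O(U(1))) *)
  (forall F, fixed delta N F -> exists H, phi_pre delta F = tpsi N H) /\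
  (* phi takes values in the fixed-point algebra *)
  (forall F, fixed delta N (phi delta N F)) /\
  (* both maps are *-algebra maps *)
  is_tmorph s (fun _ => True) (phi delta N) /\
  is_tmorph s (fixed delta N) (phi_inv delta N) /\
  (* and they are mutually inverse *)
  (forall F, phi_inv delta N (phi delta N F) = F) /\
  (forall G, fixed delta N G -> phi delta N (phi_inv delta N G) = G).
Proof.
Proof.
move=> _ _ _ _ N0 univ coac.
split; first by move=> F fx; exists (phi_inv delta N F); exact: (part1 univ coac N0 fx).
split; first by move=> F; exact: (part2 univ coac N0 F).
split.
  split.
  - by move=> F G _ _; exact: (phi_add coac N0).
  - by move=> c F _; exact: (phi_scale coac N0).
  - by move=> F G _ _; exact: (phi_mul univ coac N0).
  - by rewrite /tone (phi_etens coac N0 _ (hom1 coac)) mulr0 addr0.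
  - by move=> F _; exact: (phi_star univ coac N0).
split.
  split.
  - by move=> F G _ _; exact: (phi_inv_add coac N0).
  - by move=> c F _; exact: (phi_inv_scale coac N0).
  - by move=> F G fF fG; exact: (phi_inv_mul univ coac N0 fF fG).
  - by rewrite /tone (@phi_inv_etens _ _ _ _ _ _ _ coac N0 _ _ _ 0 (hom1 coac)) // subrr mulr0.
  - by move=> F fF; exact: (phi_inv_star univ coac N0 fF).
split; first by move=> F; exact: (part5 univ coac N0 F).
by move=> G fG; exact: (part6 univ coac N0 fG).
Qed.
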